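(* Let $A:\mathbb{C}^n\to\mathbb{C}^m$ be linear with $\lVert A\rVert_{2\to2}\le1$ and $A^*A$ injective, $b\in\mathbb{C}^m$, $\lambda>0$, $g:\mathbb{C}^n\to\mathbb{R}$ closed proper convex, and let $x^\star$ minimize $\frac12\lVert Ax-b\rVert_2^2+\lambda g(x)$. Let $p$ be a real polynomial, and set $$\gamma=\lVert I-p(A^*A)A^*A\rVert_{2\to2},\qquad \delta=\lVert (I-p(A^*A))A^*(Ax^\star-b)\rVert_2,$$ and assume $\gamma<1$. Let $y_0\in\mathbb{C}^n$ be arbitrary and $y_{k+1}=\mathrm{prox}_{\lambda g}\bigl(y_k-p(A^*A)A^*(Ay_k-b)\bigr)$, and $e_k=y_k-x^\star$. Then $\lVert e_{k+1}\rVert_2\le\gamma\lVert e_k\rVert_2+\delta$ for all $k\ge0$, and consequently $$\limsup_{k\to\infty}\lVert y_k-x^\star\rVert_2\le\frac{\delta}{1-\gamma}.$$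
   Context: $\lVert\cdot\rVert_2$ is the Euclidean norm, $A^*$ the adjoint, $\lVert\cdot\rVert_{2\to2}$ the induced operator norm, $p(A^*A)$ the polynomial evaluated at $A^*A$. For a closed proper convex $h$ and $\alpha>0$, $\mathrm{prox}_{\alpha h}(v)=\operatorname{argmin}_x \frac12\lVert x-v\rVert_2^2+\alpha h(x)$. In the paper the hypothesis $\gamma<1$ is asserted to follow from injectivity of $A^*A$ when $p$ is obtained by minimizing $\int_0^1(1-q(z)z)^2dz$ over polynomials of fixed degree. *)

(* Defs.v *)
From HB Require Import structures.
From mathcomp Require Import all_boot all_order all_algebra.
From mathcomp Require Import complex.
From mathcomp Require Import all_classical all_reals all_analysis.
Set Implicit Arguments. Unset Strict Implicit. Unset Printing Implicit Defensive.
Import Order.TTheory GRing.Theory Num.Theory.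
Local Open Scope ring_scope.
Local Open Scope classical_set_scope.

Section Defs.
Variable R : realType.
Local Notation C := R[i].

Definition csqmod (z : C) : R := (complex.Re z) ^+ 2 + (complex.Im z) ^+ 2.

Definition norm2 {n : nat} (v : 'cV[C]_n) : R :=
  Num.sqrt (\sum_(i < n) csqmod (v i 0)).

Definition adj {m n : nat} (A : 'M[C]_(m, n)) : 'M[C]_(n, m) :=
  map_mx (@conjc R) A^T.

Definition opnorm2 {m n : nat} (M : 'M[C]_(m, n)) : R :=
  sup [set norm2 (M *m x) | x in [set x : 'cV[C]_n | norm2 x <= 1]].

Definition poly_mx {n : nat} (p : {poly R}) (M : 'M[C]_n) : 'M[C]_n :=
  \sum_(i < size p) ((p`_i)%:C)%C *: M ^+ i.

(* convexity of a real-valued function on C^n (C^n viewed as a real vector space) *)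
Definition convex_fun {n : nat} (g : 'cV[C]_n -> R) : Prop :=
  forall (x y : 'cV[C]_n) (t : R), 0 <= t <= 1 ->
    g ((t%:C)%C *: x + ((1 - t)%:C)%C *: y) <= t * g x + (1 - t) * g y.

(* closedness (lower semicontinuity) of a real-valued function on C^n *)
Definition lsc_fun {n : nat} (g : 'cV[C]_n -> R) : Prop :=
  forall (x : 'cV[C]_n) (eps : R), 0 < eps ->
    exists2 d : R, 0 < d & forall y, norm2 (y - x) < d -> g x - eps < g y.

Definition is_prox {n : nat} (alpha : R) (h : 'cV[C]_n -> R) (v p : 'cV[C]_n) : Prop :=
  forall x, 2^-1 * norm2 (p - v) ^+ 2 + alpha * h p
            <= 2^-1 * norm2 (x - v) ^+ 2 + alpha * h x.

End Defs.

(* Main.v *)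
Require Import Defs.
From HB Require Import structures.
From mathcomp Require Import all_boot all_order all_algebra.
From mathcomp Require Import complex.
From mathcomp Require Import all_classical all_reals all_analysis.
From mathcomp Require Import ring lra.
Import Order.TTheory GRing.Theory Num.Theory.
Local Open Scope ring_scope.

Section Helpers.
Variable R : realType.
Local Notation C := R[i].

Lemma csqmodM (a z : C) : csqmod (a * z) = csqmod a * csqmod z.
Proof. case: a => a1 a2; case: z => z1 z2; rewrite /csqmod /=; ring. Qed.

Lemma csqmod_ge0 (z : C) : 0 <= csqmod z.
Proof. by rewrite /csqmod addr_ge0 // sqr_ge0. Qed.

Lemma ReM_real (t : R) (z : C) : complex.Re ((t%:C)%C * z) = t * complex.Re z.
Proof. case: z => z1 z2 /=; ring. Qed.
Lemma ImM_real (t : R) (z : C) : complex.Im ((t%:C)%C * z) = t * complex.Im z.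
Proof. case: z => z1 z2 /=; ring. Qed.
Lemma ReD (u v : C) : complex.Re (u + v) = complex.Re u + complex.Re v.
Proof. by case: u; case: v. Qed.
Lemma ImD (u v : C) : complex.Im (u + v) = complex.Im u + complex.Im v.
Proof. by case: u; case: v. Qed.
Lemma ReN (u : C) : complex.Re (- u) = - complex.Re u.
Proof. by case: u. Qed.
Lemma ImN (u : C) : complex.Im (- u) = - complex.Im u.
Proof. by case: u. Qed.
Lemma Re_conjM (u v : C) : complex.Re ((u^*)%C * v) =
  complex.Re u * complex.Re v + complex.Im u * complex.Im v.
Proof. case: u => u1 u2; case: v => v1 v2 /=; ring. Qed.

Section Vec.
Variable n : nat.
Implicit Types u v w : 'cV[C]_n.

Definition ip u v : R := \sum_(i < n) (complex.Re (u i 0) * complex.Re (v i 0)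
   + complex.Im (u i 0) * complex.Im (v i 0)).

Lemma norm2_ge0 v : 0 <= norm2 v.
Proof. exact: sqrtr_ge0. Qed.

Lemma norm2_sq v : norm2 v ^+ 2 = ip v v.
Proof.
rewrite /norm2 sqr_sqrtr; last by apply: sumr_ge0 => i _; apply: csqmod_ge0.
by apply: eq_bigr => i _; rewrite /csqmod !expr2.
Qed.

Lemma ip_sym u v : ip u v = ip v u.
Proof. by apply: eq_bigr => i _; ring. Qed.

Lemma ipDr u v w : ip u (v + w) = ip u v + ip u w.
Proof. rewrite /ip -big_split /=; apply: eq_bigr => i _; rewrite !mxE ReD ImD; ring. Qed.

Lemma ipNr u v : ip u (- v) = - ip u v.
Proof. rewrite /ip -sumrN /=; apply: eq_bigr => i _; rewrite !mxE ReN ImN; ring. Qed.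

Lemma ipBr u v w : ip u (v - w) = ip u v - ip u w.
Proof. by rewrite ipDr ipNr. Qed.

Lemma ipDl u v w : ip (v + w) u = ip v u + ip w u.
Proof. by rewrite ip_sym ipDr !(ip_sym u). Qed.

Lemma ipNl u v : ip (- v) u = - ip v u.
Proof. by rewrite ip_sym ipNr ip_sym. Qed.

Lemma ipBl u v w : ip (v - w) u = ip v u - ip w u.
Proof. by rewrite ipDl ipNl. Qed.

Lemma ipZr t u v : ip u ((t%:C)%C *: v) = t * ip u v.
Proof. rewrite /ip mulr_sumr; apply: eq_bigr => i _; rewrite !mxE ReM_real ImM_real; ring. Qed.

Lemma ipZl t u v : ip ((t%:C)%C *: v) u = t * ip v u.
Proof. by rewrite ip_sym ipZr ip_sym. Qed.

Lemma norm2_sqD u v : norm2 (u + v) ^+ 2 = norm2 u ^+ 2 + 2 * ip u v + norm2 v ^+ 2.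
Proof. rewrite !norm2_sq ipDl !ipDr (ip_sym v u); ring. Qed.

Lemma norm2_sqB u v : norm2 (u - v) ^+ 2 = norm2 u ^+ 2 - 2 * ip u v + norm2 v ^+ 2.
Proof. rewrite !norm2_sq ipBl !ipBr (ip_sym v u); ring. Qed.

Lemma norm2_sqZ t u : norm2 ((t%:C)%C *: u) ^+ 2 = t ^+ 2 * norm2 u ^+ 2.
Proof. rewrite !norm2_sq ipZl ipZr; ring. Qed.

Lemma norm2_Z t u : norm2 ((t%:C)%C *: u) = `|t| * norm2 u.
Proof.
rewrite /norm2 -sqrtr_sqr -sqrtrM ?sqr_ge0 // mulr_sumr; congr Num.sqrt.
by apply: eq_bigr => i _; rewrite mxE csqmodM /csqmod /=; ring.
Qed.

Lemma norm2_eq0_ip u v : norm2 u = 0 -> ip u v = 0.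
Proof.
move=> h; have : ip u u = 0 by rewrite -norm2_sq h expr0n.
move=> /eqP; rewrite psumr_eq0; last by move=> i _; rewrite addr_ge0 // -expr2 sqr_ge0.
move=> /allP H; rewrite /ip big1 // => i _.
have := H i (mem_index_enum _); rewrite /= paddr_eq0 -?expr2 ?sqr_ge0 //.
by rewrite !sqrf_eq0 => /andP[/eqP -> /eqP ->]; ring.
Qed.

Lemma ip_CS u v : ip u v <= norm2 u * norm2 v.
Proof.
have [a0|] := eqVneq (norm2 u) 0; first by rewrite norm2_eq0_ip // a0 mul0r.
have [b0|] := eqVneq (norm2 v) 0; first by rewrite ip_sym norm2_eq0_ip // b0 mulr0.
move=> bn an.
have ha : 0 < norm2 u by rewrite lt_def an norm2_ge0.
have hb : 0 < norm2 v by rewrite lt_def bn norm2_ge0.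
have := sqr_ge0 (norm2 ((norm2 v)%:C%C *: u - (norm2 u)%:C%C *: v)).
rewrite norm2_sqB !norm2_sqZ ipZl ipZr => H.
have hab : 0 < norm2 u * norm2 v by apply: mulr_gt0.
have : 0 <= (2 * (norm2 u * norm2 v)) * (norm2 u * norm2 v - ip u v) by nra.
by rewrite pmulr_rge0 ?subr_ge0 // mulr_gt0.
Qed.

Lemma norm2_triangle u v : norm2 (u + v) <= norm2 u + norm2 v.
Proof.
have h : norm2 (u + v) ^+ 2 <= (norm2 u + norm2 v) ^+ 2.
  by rewrite norm2_sqD; have := ip_CS u v; nra.
by rewrite -(ler_pXn2r (_ : 0 < 2)%N) ?nnegrE ?addr_ge0 ?norm2_ge0.
Qed.

Lemma norm2_cZ a u : norm2 (a *: u) = Num.sqrt (csqmod a) * norm2 u.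
Proof.
rewrite /norm2 -sqrtrM ?csqmod_ge0 // mulr_sumr; congr Num.sqrt.
by apply: eq_bigr => i _; rewrite mxE csqmodM.
Qed.

Lemma norm2_0 : norm2 (0 : 'cV[C]_n) = 0.
Proof. by rewrite /norm2 big1 ?sqrtr0 // => i _; rewrite mxE /csqmod /= expr0n /= addr0. Qed.

Lemma norm2_sum (k : nat) (F : 'I_k -> 'cV[C]_n) :
  norm2 (\sum_(j < k) F j) <= \sum_(j < k) norm2 (F j).
Proof.
elim: k F => [|k IH] F; first by rewrite !big_ord0 norm2_0.
rewrite !big_ord_recr /=; apply: le_trans (norm2_triangle _ _) _.
by rewrite lerD2r IH.
Qed.

Lemma entry_le_norm2 u (j : 'I_n) : Num.sqrt (csqmod (u j 0)) <= norm2 u.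
Proof.
apply: ler_wsqrtr; rewrite (bigD1 j) //= lerDl.
by apply: sumr_ge0 => i _; apply: csqmod_ge0.
Qed.

End Vec.
Arguments ip {n} u v.

Lemma mulmx_col_sum m n (M : 'M[C]_(m, n)) (x : 'cV[C]_n) :
  M *m x = \sum_(j < n) x j 0 *: col j M.
Proof.
apply/matrixP => i k; rewrite !mxE summxE; apply: eq_bigr => j _.
by rewrite !mxE (ord1 k) mulrC.
Qed.

Lemma mulmx_norm2_bound m n (M : 'M[C]_(m, n)) (x : 'cV[C]_n) :
  norm2 (M *m x) <= norm2 x * \sum_(j < n) norm2 (col j M).
Proof.
rewrite mulmx_col_sum mulr_sumr; apply: le_trans (norm2_sum _ _ _) _.
apply: ler_sum => j _; rewrite norm2_cZ ler_wpM2r ?norm2_ge0 //.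
exact: entry_le_norm2.
Qed.

Lemma opnorm2_ub m n (M : 'M[C]_(m, n)) :
  has_ubound [set norm2 (M *m x) | x in [set x : 'cV[C]_n | norm2 x <= 1]].
Proof.
exists (\sum_(j < n) norm2 (col j M)) => _ [x /= hx <-].
move: (mulmx_norm2_bound _ _ M x) => hb; apply: (le_trans hb).
rewrite -[X in _ <= X]mul1r ler_wpM2r //.
by apply: sumr_ge0 => j _; apply: norm2_ge0.
Qed.

Lemma opnorm2_ge0 m n (M : 'M[C]_(m, n)) : 0 <= opnorm2 M.
Proof.
apply: (ub_le_sup (opnorm2_ub _ _ M)); exists 0; rewrite /= ?norm2_0 //.
by rewrite mulmx0 norm2_0.
Qed.

Lemma opnorm2_bound m n (M : 'M[C]_(m, n)) (x : 'cV[C]_n) :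
  norm2 (M *m x) <= opnorm2 M * norm2 x.
Proof.
have [x0|xn] := eqVneq (norm2 x) 0.
  rewrite x0 mulr0; have := mulmx_norm2_bound _ _ M x; rewrite x0 mul0r => h.
  by apply: le_trans h _.
have hx : 0 < norm2 x by rewrite lt_def xn norm2_ge0.
set x' := ((norm2 x)^-1)%:C%C *: x.
have hx' : norm2 x' = 1 by rewrite norm2_Z ger0_norm ?invr_ge0 ?norm2_ge0 // mulVf.
have : norm2 (M *m x') <= opnorm2 M.
  by apply: (ub_le_sup (opnorm2_ub _ _ M)); exists x' => //=; rewrite hx'.
rewrite /x' -scalemxAr norm2_Z ger0_norm ?invr_ge0 ?norm2_ge0 //.
by rewrite ler_pdivrMl // mulrC.
Qed.

Lemma ip_ReE n (u v : 'cV[C]_n) : ip u v = complex.Re (\sum_(i < n) ((u i 0)^*)%C * v i 0).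
Proof.
rewrite (big_morph (@complex.Re R) ReD (erefl (complex.Re (0 : C)))) /=.
by apply: eq_bigr => i _; rewrite Re_conjM.
Qed.

Lemma ip_adj m n (A : 'M[C]_(m, n)) (z : 'cV[C]_n) (r : 'cV[C]_m) :
  ip (A *m z) r = ip z (adj A *m r).
Proof.
rewrite !ip_ReE; congr complex.Re.
under eq_bigr => i _ do rewrite mxE rmorph_sum /= mulr_suml.
rewrite exchange_big /=; apply: eq_bigr => j _.
rewrite mxE mulr_sumr; apply: eq_bigr => i _.
rewrite /adj !mxE rmorphM /=; ring.
Qed.

Lemma prox_vi n (alpha : R) (h : 'cV[C]_n -> R) v p :
  0 <= alpha -> convex_fun h -> is_prox alpha h v p ->
  forall x, 0 <= ip (x - p) (p - v) + alpha * (h x - h p).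
Proof.
move=> al0 hc hp x.
set a := ip (x - p) (p - v) + alpha * (h x - h p).
rewrite leNgt; apply/negP => a0.
set K := norm2 (x - p) ^+ 2 / 2.
have K0 : 0 <= K by rewrite divr_ge0 ?sqr_ge0.
set D := 2 * K + 1 - a.
have D0 : 0 < D by rewrite /D; lra.
set t := - a / D.
have t0 : 0 < t by rewrite divr_gt0 // oppr_gt0.
have tD : t * D = - a by rewrite /t mulfVK // gt_eqF.
have t1 : t <= 1 by rewrite /t ler_pdivrMr // mul1r /D; lra.
have eq1 : (t%:C)%C *: x + ((1 - t)%:C)%C *: p - v = (t%:C)%C *: (x - p) + (p - v).
  apply/matrixP => i j; rewrite !mxE rmorphB rmorph1 /=; ring.
have := hp ((t%:C)%C *: x + ((1 - t)%:C)%C *: p).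
rewrite eq1 (norm2_sqD _ ((t%:C)%C *: (x - p))) norm2_sqZ ipZl => H1.
have H2 : h ((t%:C)%C *: x + ((1 - t)%:C)%C *: p) <= t * h x + (1 - t) * h p.
  by apply: hc; rewrite (ltW t0) t1.
have H3 : alpha * h ((t%:C)%C *: x + ((1 - t)%:C)%C *: p) <=
          alpha * (t * h x + (1 - t) * h p) by apply: ler_wpM2l.
have H4 : 0 <= t * (t * K + a).
  rewrite /K /a; move: H1 H3; set N := norm2 (p - v) ^+ 2.
  set c := ip (x - p) (p - v); set hx := h x; set hpp := h p.
  set hxt := h _ => H1 H3.
  have : 0 <= t ^+ 2 * norm2 (x - p) ^+ 2 / 2 + t * c + t * alpha * (hx - hpp).
    rewrite -subr_ge0; apply: le_trans (_ : 0 <= 0) _ => //; nra.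
  move=> H; apply: le_trans H _; rewrite le_eqVlt; apply/orP; left; apply/eqP; ring.
have H5 : (t * K + a) * D < 0.
  have -> : (t * K + a) * D = a * K + a - a ^+ 2.
    by rewrite mulrDl -mulrA (mulrC K) mulrA tD /D; ring.
  nra.
have : t * K + a < 0.
  by move: H5; rewrite pmulr_llt0.
move=> H6; move: H4; rewrite pmulr_rge0 //; lra.
Qed.

Lemma prox_nonexp n (alpha : R) (h : 'cV[C]_n -> R) v1 v2 p1 p2 :
  0 <= alpha -> convex_fun h -> is_prox alpha h v1 p1 -> is_prox alpha h v2 p2 ->
  norm2 (p1 - p2) <= norm2 (v1 - v2).
Proof.
move=> al0 hc h1 h2.
have H1 := prox_vi _ _ _ _ _ al0 hc h1 p2.
have H2 := prox_vi _ _ _ _ _ al0 hc h2 p1.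
rewrite -opprB ipNl !ipBr in H1; rewrite !ipBr in H2.
have E : norm2 (p1 - p2) ^+ 2 <= ip (p1 - p2) (v1 - v2).
  rewrite norm2_sq !ipBr; lra.
have CS := ip_CS _ (p1 - p2) (v1 - v2).
have n1 := norm2_ge0 _ (p1 - p2); have n2 := norm2_ge0 _ (v1 - v2).
nra.
Qed.

Lemma vec_id1 n (x y w : 'cV[C]_n) : x - (y - w) = (x - y) + w.
Proof. by apply/matrixP => i j; rewrite !mxE; ring. Qed.

Lemma vec_id3 n (x w : 'cV[C]_n) : x - (x - w) = w.
Proof. by apply/matrixP => i j; rewrite !mxE; ring. Qed.

Lemma vec_id2 n (a c b : 'cV[C]_n) : a - b = (a - c) + (c - b).
Proof. by apply/matrixP => i j; rewrite !mxE; ring. Qed.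

Lemma iter_identity m n (A : 'M[C]_(m, n)) (P : 'M[C]_n) (b : 'cV[C]_m) (x y : 'cV[C]_n) :
  (y - P *m adj A *m (A *m y - b)) - (x - adj A *m (A *m x - b)) =
  (1%:M - P *m (adj A *m A)) *m (y - x) + (1%:M - P) *m adj A *m (A *m x - b).
Proof.
rewrite (vec_id2 _ (A *m y) (A *m x) b) -mulmxBr.
rewrite !mulmxBl !mul1mx !mulmxDr -!mulmxA.
move: (P *m (adj A *m (A *m (y - x)))) (P *m (adj A *m (A *m x - b))) (adj A *m (A *m x - b)) => u v w.
by apply/matrixP => i j; rewrite !mxE; ring.
Qed.

End Helpers.

Theorem mainTheorem7 (R : realType) (m n : nat)
  (A : 'M[R[i]]_(m, n)) (b : 'cV[R[i]]_m) (lambda : R)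
  (g : 'cV[R[i]]_n -> R) (xstar : 'cV[R[i]]_n) (p : {poly R})
  (y : nat -> 'cV[R[i]]_n) :
  opnorm2 A <= 1 ->
  (forall x : 'cV[R[i]]_n, (adj A *m A) *m x = 0 -> x = 0) ->
  0 < lambda ->
  convex_fun g -> lsc_fun g ->
  (forall x : 'cV[R[i]]_n,
     2^-1 * norm2 (A *m xstar - b) ^+ 2 + lambda * g xstar
     <= 2^-1 * norm2 (A *m x - b) ^+ 2 + lambda * g x) ->
  let AA := adj A *m A in
  let gamma := opnorm2 (1%:M - poly_mx p AA *m AA) in
  let delta := norm2 ((1%:M - poly_mx p AA) *m adj A *m (A *m xstar - b)) in
  gamma < 1 ->
  (forall k, is_prox lambda g
               (y k - poly_mx p AA *m adj A *m (A *m y k - b)) (y k.+1)) ->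
  (forall k, norm2 (y k.+1 - xstar) <= gamma * norm2 (y k - xstar) + delta) /\
  (limn_esup (fun k => (norm2 (y k - xstar))%:E) <= (delta / (1 - gamma))%:E)%E.
Proof.
move=> hA hinj hl hc hlsc hopt AA gamma delta hg hy.
set r := A *m xstar - b.
set us := xstar - adj A *m r.
have hfix : is_prox lambda g us xstar.
  move=> x; rewrite /us vec_id3 vec_id1.
  have H := hopt x.
  rewrite (vec_id2 _ _ (A *m x) (A *m xstar) b) -mulmxBr -/r in H.
  rewrite norm2_sqD ip_adj in H; rewrite norm2_sqD.
  have HA : norm2 (A *m (x - xstar)) <= norm2 (x - xstar).
    apply: le_trans (opnorm2_bound _ _ _ A _) _.
    by rewrite -[X in _ <= X]mul1r ler_wpM2r ?norm2_ge0.
  have HA2 : norm2 (A *m (x - xstar)) ^+ 2 <= norm2 (x - xstar) ^+ 2.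
    by rewrite ler_pXn2r ?nnegrE ?norm2_ge0.
  lra.
have step : forall k, norm2 (y k.+1 - xstar) <= gamma * norm2 (y k - xstar) + delta.
  move=> k.
  apply: le_trans (prox_nonexp _ _ _ _ _ _ _ _ (ltW hl) hc (hy k) hfix) _.
  rewrite /us /r iter_identity.
  apply: le_trans (norm2_triangle _ _ _ _) _.
  by rewrite lerD2r; apply: opnorm2_bound.
split => //.
have g0 : 0 <= gamma by apply: opnorm2_ge0.
set L := delta / (1 - gamma).
have hL : delta = L * (1 - gamma) by rewrite /L mulfVK // subr_eq0 gt_eqF.
set M := `|norm2 (y 0%N - xstar) - L|.
have M0 : 0 <= M by rewrite /M normr_ge0.
have bound : forall k, norm2 (y k - xstar) - L <= gamma ^+ k * M.
  elim => [|k IH]; first by rewrite expr0 mul1r ler_norm.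
  have := step k; rewrite exprS -mulrA => H.
  have : gamma * (norm2 (y k - xstar) - L) <= gamma * (gamma ^+ k * M).
    by apply: ler_wpM2l.
  lra.
apply/lee_addgt0Pr => eps eps0.
have Hev : (\forall k \near \oo, gamma ^+ k * M < eps)%classic.
  have : `|gamma| < 1 by rewrite ger0_norm.
  move=> /cvg_expr /cvgrPdist_lt /(_ (eps / (M + 1))).
  have e1 : 0 < eps / (M + 1) by rewrite divr_gt0 // ltr_wpDl.
  move=> /(_ e1); apply: filterS => k.
  rewrite sub0r normrN ger0_norm ?exprn_ge0 // => hk.
  have hk2 : gamma ^+ k * (M + 1) < eps by rewrite -ltr_pdivlMr // ltr_wpDl.
  apply: le_lt_trans hk2.
  by rewrite ler_wpM2l ?exprn_ge0 // lerDl.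
rewrite limn_esup_lim; apply: lime_le; first exact: is_cvg_esups.
apply: filterS Hev => N HN /=.
apply: ge_ereal_sup => _ [k /= Nk <-].
rewrite -EFinD lee_fin.
have := bound k.
have : gamma ^+ k <= gamma ^+ N by apply: ler_wiXn2l => //; apply: ltW.
move=> hkN hb.
have : gamma ^+ k * M <= gamma ^+ N * M by apply: ler_wpM2r.
lra.
Qed.
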